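(* Let $\varphi:\mathbb{R}^n\to\mathbb{R}$ be of class $\mathcal C^{1,1}$ around its tilt-stable local minimizer $\bar x$. Then there is a neighborhood $O$ of $\bar x$ such that the set $\Upsilon(x):=\{y\in\mathbb{R}^n: -\nabla\varphi(x)\in D\nabla\varphi(x)(y)\}$ is nonempty and compact for all $x\in O$.
   Context: $\mathcal C^{1,1}$ near $\bar x$: differentiable with locally Lipschitz gradient near $\bar x$. Tangent cone $T_\Omega(\bar x)=\{w:\exists t_k\downarrow0,w_k\to w,\bar x+t_kw_k\in\Omega\}$; graphical derivative of single-valued $f$: $Df(x)(u)=\{w:(u,w)\in T_{\operatorname{gph}f}(x,f(x))\}$. $\bar x$ is a tilt-stable local minimizer of $\varphi$ if for some $\gamma>0$ the mapping $M_\gamma(v)=\operatorname{argmin}\{\varphi(x)-\langle v,x\rangle:x\in\mathbb B_\gamma(\bar x)\}$ is single-valued and Lipschitz continuous on a neighborhood of $0$, with $M_\gamma(0)=\{\bar x\}$. *)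

(* Defs.v *)
From HB Require Import structures.
From mathcomp Require Import all_boot all_order all_algebra.
From mathcomp Require Import all_classical all_reals all_analysis.
Set Implicit Arguments. Unset Strict Implicit. Unset Printing Implicit Defensive.
Import Order.TTheory GRing.Theory Num.Theory.
Import numFieldNormedType.Exports.
Local Open Scope classical_set_scope.
Local Open Scope ring_scope.

Section Defs.
Variables (R : realType) (n : nat).
Notation V := 'rV[R]_n.

Definition dotv (u v : V) : R := \sum_(i < n) u 0 i * v 0 i.
Definition enorm (u : V) : R := Num.sqrt (dotv u u).

Definition is_grad (f : V -> R) (x g : V) : Prop :=
  forall eps : R, 0 < eps -> exists2 del : R, 0 < del &
    forall h : V, enorm h < del ->
      `| f (x + h) - f x - dotv g h | <= eps * enorm h.

Definition C11_near (f : V -> R) (G : V -> V) (xbar : V) : Prop :=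
  exists2 r : R, 0 < r &
    (forall x, enorm (x - xbar) < r -> is_grad f x (G x)) /\
    (forall x, enorm (x - xbar) < r ->
       exists del L : R, 0 < del /\
         forall y z, enorm (y - x) < del -> enorm (z - x) < del ->
           enorm (G y - G z) <= L * enorm (y - z)).

Definition Mtilt (f : V -> R) (xbar : V) (gam : R) (v : V) : set V :=
  [set x | enorm (x - xbar) <= gam /\
           forall y, enorm (y - xbar) <= gam -> f x - dotv v x <= f y - dotv v y].

Definition tilt_stable_min (f : V -> R) (xbar : V) : Prop :=
  exists2 gam : R, 0 < gam &
    exists del L : R, exists m : V -> V, 0 < del /\
      (forall v, enorm v < del -> Mtilt f xbar gam v = [set m v]) /\
      (forall v w, enorm v < del -> enorm w < del ->
         enorm (m v - m w) <= L * enorm (v - w)) /\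
      Mtilt f xbar gam 0 = [set xbar].

End Defs.

Definition tangent_cone (R : realType) (E : normedModType R) (Om : set E) (x : E)
  : set E :=
  [set w | exists (t : nat -> R) (wk : nat -> E),
     (forall k, 0 < t k) /\ t @ \oo --> (0 : R) /\ wk @ \oo --> w /\
     (forall k, Om (x + t k *: wk k))].

Definition graph_of (R : realType) (n : nat) (g : 'rV[R]_n -> 'rV[R]_n)
  : set ('rV[R]_n * 'rV[R]_n) := [set p | p.2 = g p.1].

Definition graph_deriv (R : realType) (n : nat) (g : 'rV[R]_n -> 'rV[R]_n)
  (x u : 'rV[R]_n) : set 'rV[R]_n :=
  [set w | tangent_cone (graph_of g) (x, g x) (u, w)].

Definition Upsilon (R : realType) (n : nat) (G : 'rV[R]_n -> 'rV[R]_n)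
  (x : 'rV[R]_n) : set 'rV[R]_n :=
  [set y | graph_deriv G x y (- G x)].

(* Main.v *)
Require Import Defs.
From HB Require Import structures.
From mathcomp Require Import all_boot all_order all_algebra.
From mathcomp Require Import all_classical all_reals all_analysis.
From mathcomp Require Import ring lra.
Import Order.TTheory GRing.Theory Num.Theory.
Import numFieldNormedType.Exports.
Local Open Scope classical_set_scope.
Local Open Scope ring_scope.


Section Enorm.
Variables (R : realType) (n : nat).
Implicit Types u v w : 'rV[R]_n.

Lemma dotvC u v : dotv u v = dotv v u.
Proof. by apply: eq_bigr => i _; rewrite mulrC. Qed.
Lemma dotvDl u v w : dotv (u + v) w = dotv u w + dotv v w.
Proof. by rewrite /dotv -big_split; apply: eq_bigr => i _; rewrite mxE mulrDl. Qed.
Lemma dotvDr u v w : dotv w (u + v) = dotv w u + dotv w v.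
Proof. by rewrite dotvC dotvDl !(dotvC w). Qed.
Lemma dotvZl a u v : dotv (a *: u) v = a * dotv u v.
Proof. by rewrite /dotv mulr_sumr; apply: eq_bigr => i _; rewrite mxE mulrA. Qed.
Lemma dotvZr a u v : dotv u (a *: v) = a * dotv u v.
Proof. by rewrite dotvC dotvZl dotvC. Qed.
Lemma dotvNl u v : dotv (- u) v = - dotv u v.
Proof. by rewrite -scaleN1r dotvZl mulN1r. Qed.
Lemma dotvNr u v : dotv u (- v) = - dotv u v.
Proof. by rewrite -scaleN1r dotvZr mulN1r. Qed.
Lemma dotvBl u v w : dotv (u - v) w = dotv u w - dotv v w.
Proof. by rewrite dotvDl dotvNl. Qed.
Lemma dotvBr u v w : dotv w (u - v) = dotv w u - dotv w v.
Proof. by rewrite dotvDr dotvNr. Qed.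
Lemma dotv0l v : dotv 0 v = 0.
Proof. by rewrite -(scale0r 0) dotvZl mul0r. Qed.
Lemma dotv0r v : dotv v 0 = 0.
Proof. by rewrite dotvC dotv0l. Qed.
Lemma dotvv_ge0 u : 0 <= dotv u u.
Proof. by apply: sumr_ge0 => i _; rewrite -expr2 sqr_ge0. Qed.
Lemma dotvv_eq0 u : dotv u u = 0 -> u = 0.
Proof.
move=> h; apply/rowP => i; rewrite mxE.
have hp : forall j : 'I_n, true -> 0 <= u 0 j * u 0 j by move=> j _; rewrite -expr2 sqr_ge0.
have := @psumr_eq0P R _ _ (fun j => u 0 j * u 0 j) hp h i erefl.
move/eqP; rewrite -expr2 sqrf_eq0 => /eqP.
by rewrite (_ : (0 : 'I_1) = ord0) // => ->.
Qed.

Lemma enorm_ge0 u : 0 <= enorm u.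
Proof. exact: sqrtr_ge0. Qed.
Lemma enorm_sq u : enorm u ^+ 2 = dotv u u.
Proof. by rewrite /enorm sqr_sqrtr // dotvv_ge0. Qed.
Lemma enorm0 : enorm (0 : 'rV[R]_n) = 0.
Proof. by rewrite /enorm dotv0l sqrtr0. Qed.
Lemma enorm_eq0 u : enorm u = 0 -> u = 0.
Proof. by move=> h; apply: dotvv_eq0; rewrite -enorm_sq h expr0n. Qed.
Lemma enormZ a u : enorm (a *: u) = `|a| * enorm u.
Proof. by rewrite /enorm dotvZl dotvZr mulrA -expr2 sqrtrM ?sqr_ge0 // sqrtr_sqr. Qed.
Lemma enormN u : enorm (- u) = enorm u.
Proof. by rewrite -scaleN1r enormZ normrN normr1 mul1r. Qed.
Lemma enormB u v : enorm (u - v) = enorm (v - u).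
Proof. by rewrite -enormN opprB. Qed.

Lemma CS u v : `|dotv u v| <= enorm u * enorm v.
Proof.
set A := enorm u; set B := enorm v; set P := dotv u v.
have hA : 0 <= A := enorm_ge0 u. have hB : 0 <= B := enorm_ge0 v.
have hA2 : dotv u u = A ^+ 2 by rewrite enorm_sq.
have hB2 : dotv v v = B ^+ 2 by rewrite enorm_sq.
have e1 := dotvv_ge0 (B *: u - A *: v).
have e2 := dotvv_ge0 (B *: u + A *: v).
rewrite dotvBl !dotvBr !dotvZl !dotvZr (dotvC v u) hA2 hB2 -/P in e1.
rewrite dotvDl !dotvDr !dotvZl !dotvZr (dotvC v u) hA2 hB2 -/P in e2.
have [A0|A0] := eqVneq A 0.
  by rewrite /P (enorm_eq0 u A0) dotv0l normr0 mulr_ge0.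
have [B0|B0] := eqVneq B 0.
  by rewrite /P (enorm_eq0 v B0) dotv0r normr0 mulr_ge0.
have hAB : 0 < A * B by rewrite mulr_gt0 // lt_def ?A0 ?B0.
rewrite ler_norml; apply/andP; split.
  rewrite -(ler_pM2l hAB); nra.
rewrite -(ler_pM2l hAB); nra.
Qed.

Lemma dotv_le u v : dotv u v <= enorm u * enorm v.
Proof. exact: le_trans (ler_norm _) (CS u v). Qed.

Lemma enormD u v : enorm (u + v) <= enorm u + enorm v.
Proof.
rewrite -(@ler_pXn2r _ 2) ?nnegrE ?addr_ge0 ?enorm_ge0 //.
rewrite enorm_sq dotvDl !dotvDr (dotvC v u) -!enorm_sq.
have := dotv_le u v; nra.
Qed.

Lemma coord_le u i : `|u 0 i| <= enorm u.
Proof.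
rewrite -(@ler_pXn2r _ 2) ?nnegrE ?enorm_ge0 // enorm_sq real_normK ?num_real //.
rewrite /dotv (bigD1 i) //= expr2 lerDl; apply: sumr_ge0 => j _; by rewrite -expr2 sqr_ge0.
Qed.

Lemma coord_le_mx u i : `|u 0 i| <= `|u|.
Proof.
change (`|u 0 i| <= mx_norm u); rewrite mx_normrE.
exact: (le_bigmax _ (fun ij : 'I_1 * 'I_n => `|u ij.1 ij.2|) (0, i)).
Qed.

Lemma mx_le_enorm u : `|u| <= enorm u.
Proof.
change (mx_norm u <= enorm u); rewrite mx_normrE.
apply: bigmax_le; first exact: enorm_ge0.
by move=> [a b] _ /=; rewrite (ord1 a); apply: coord_le.
Qed.

Lemma enorm_le_mx u : enorm u <= n.+1%:R * `|u|.
Proof.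
have h1 : enorm u <= \sum_(i < n) `|u 0 i|.
  rewrite -(@ler_pXn2r _ 2) ?nnegrE ?enorm_ge0 ?sumr_ge0 // enorm_sq.
  rewrite expr2 mulr_suml /dotv; apply: ler_sum => i _.
  rewrite -[u 0 i * u 0 i]/(u 0 i ^+ 2) -real_normK ?num_real // expr2.
  apply: ler_wpM2l => //; rewrite (bigD1 i) //= lerDl; exact: sumr_ge0.
apply: (le_trans h1); apply: le_trans (_ : \sum_(i < n) `|u| <= _).
  by apply: ler_sum => i _; apply: coord_le_mx.
rewrite sumr_const card_ord -[_ *+ n]mulr_natl; apply: ler_wpM2r; first exact: normr_ge0.
by rewrite ler_nat.
Qed.

Let N := (n.+1%:R : R).
Lemma N_gt0 : 0 < N. Proof. by rewrite /N ltr0n. Qed.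

Lemma enorm_lt_mx u e : 0 < e -> `|u| < e / N -> enorm u < e.
Proof.
move=> e0 h; apply: (le_lt_trans (enorm_le_mx u)).
by rewrite mulrC -ltr_pdivlMr ?N_gt0.
Qed.

Lemma cvg_enormP {T : Type} {F : set_system T} {FF : Filter F} (f : T -> 'rV[R]_n) w :
  f @ F --> w <-> forall e, 0 < e -> \forall k \near F, enorm (f k - w) < e.
Proof.
split.
  move=> /cvgrPdist_lt h e e0.
  have := h (e / N); rewrite divr_gt0 ?N_gt0 // => /(_ erefl).
  by apply: filterS => k hk; apply: enorm_lt_mx => //; rewrite -normrN opprB.
move=> h; apply/cvgrPdist_lt => e e0; apply: filterS (h e e0) => k hk.
by rewrite -normrN opprB; apply: le_lt_trans (mx_le_enorm _) hk.
Qed.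

Lemma ball_mx (z y : 'rV[R]_n) e : ball z e y -> `|z - y| < e.
Proof. by rewrite mx_norm_ball. Qed.

Lemma cont_enorm (f : 'rV[R]_n -> R) z :
  (forall e, 0 < e -> exists2 d, 0 < d & forall y, enorm (y - z) < d -> `|f y - f z| < e) ->
  {for z, continuous f}.
Proof.
move=> h; apply/(@cvgrPdist_lt _ _ _ _ (nbhs_filter z)) => e e0; have [d d0 hd] := h e e0.
apply/nbhs_ballP; exists (d / N); first exact: (divr_gt0 d0 N_gt0).
move=> y /ball_mx hy; rewrite -normrN opprB; apply: hd.
by apply: enorm_lt_mx => //; rewrite -normrN opprB.
Qed.

Lemma closed_eball (c : 'rV[R]_n) r : closed [set y | enorm (y - c) <= r].
Proof.
move=> y hy /=; apply/ler_addgt0Pr => e e0.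
have [u [hu hyu]] := hy _ (nbhsx_ballx y (e / N) (divr_gt0 e0 N_gt0)).
move/ball_mx: hyu => hyu.
have := enorm_lt_mx (y-u) e e0 hyu.
have := enormD (y - u) (u - c).
rewrite addrA subrK => h1 h2; apply: le_trans h1 _; rewrite addrC; apply: lerD; first exact: hu.
exact: ltW.
Qed.

Lemma bounded_eball (A : set 'rV[R]_n) B : (forall y, A y -> enorm y <= B) -> bounded_set A.
Proof.
move=> h; rewrite /bounded_near; apply: filterS (nbhs_pinfty_ge (num_real B)).
by move=> M hM y Ay /=; apply: le_trans (mx_le_enorm _) (le_trans (h _ Ay) hM).
Qed.
End Enorm.
Arguments dotvC {R n}.
Arguments dotvDl {R n}.
Arguments dotvDr {R n}.
Arguments dotvZl {R n}.
Arguments dotvZr {R n}.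
Arguments dotvNl {R n}.
Arguments dotvNr {R n}.
Arguments dotvBl {R n}.
Arguments dotvBr {R n}.
Arguments dotv0l {R n}.
Arguments dotv0r {R n}.
Arguments dotvv_ge0 {R n}.
Arguments dotvv_eq0 {R n}.
Arguments enorm_ge0 {R n}.
Arguments enorm_sq {R n}.
Arguments enorm_eq0 {R n}.
Arguments enormZ {R n}.
Arguments enormN {R n}.
Arguments enormB {R n}.
Arguments CS {R n}.
Arguments dotv_le {R n}.
Arguments enormD {R n}.
Arguments coord_le {R n}.
Arguments coord_le_mx {R n}.
Arguments mx_le_enorm {R n}.
Arguments enorm_le_mx {R n}.
Arguments enorm_lt_mx {R n}.
Arguments ball_mx {R n}.
Arguments cont_enorm {R n}.
Arguments closed_eball {R n}.
Arguments bounded_eball {R n}.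
Arguments cvg_enormP {R n T F FF}.


Section Main.
Variables (R : realType) (n : nat) (phi : 'rV[R]_n -> R) (G : 'rV[R]_n -> 'rV[R]_n).

Lemma enorm_gt0 (u : 'rV[R]_n) : u != 0 -> 0 < enorm u.
Proof.
move=> h; rewrite lt_def enorm_ge0 andbT; apply/eqP => /enorm_eq0 h0.
by rewrite h0 eqxx in h.
Qed.

Lemma CP (xb z v : 'rV[R]_n) gam :
  is_grad phi z (G z) ->
  (forall y, enorm (y - xb) <= gam -> phi z - dotv v z <= phi y - dotv v y) ->
  enorm (z - xb) < gam -> G z = v.
Proof.
move=> hg hmin hz.
have [d0|dn0] := eqVneq (v - G z) 0.
  by apply/esym/eqP; rewrite -subr_eq0 d0.
exfalso; set d := v - G z in dn0; set a := enorm d.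
have a0 : 0 < a by apply: enorm_gt0.
have [del del0 hdel] := hg (a / 2) (divr_gt0 a0 (ltr0Sn _ 1)).
set c := Num.min del (gam - enorm (z - xb)).
have c0 : 0 < c by rewrite lt_min del0 subr_gt0.
set s := c / (2 * a).
have s0 : 0 < s by rewrite divr_gt0 // mulr_gt0.
have hh : enorm (s *: d) = c / 2.
  rewrite enormZ gtr0_norm // /s -/a; field; exact: lt0r_neq0.
have hc1 : c <= del by rewrite ge_min lexx.
have hc2 : c <= gam - enorm (z - xb) by rewrite ge_min lexx orbT.
have := hdel (s *: d); rewrite hh => /(_ ltac:(lra)) h1.
have := hmin (z + s *: d).
have hy : enorm (z + s *: d - xb) <= gam.
  rewrite addrAC. apply: le_trans (enormD _ _) _; rewrite hh; lra.
move=> /(_ hy) h2.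
rewrite dotvDr in h2.
have h3 : dotv d (s *: d) = s * a ^+ 2 by rewrite dotvZr enorm_sq.
rewrite /d dotvBl in h3.
move: h1; rewrite ler_norml => /andP[_ h1].
have : s * a ^+ 2 <= a / 2 * (c / 2) by lra.
rewrite /s; have : c / (2 * a) * a ^+ 2 = c * a / 2.
  by field; exact: lt0r_neq0.
move=> ->; have : 0 < c * a by rewrite mulr_gt0.
lra.
Qed.
End Main.

Lemma DL (R : realType) n (phi : 'rV[R]_n -> R) (x0 h : 'rV[R]_n) (s0 : R) gr :
  is_grad phi (x0 + s0 *: h) gr ->
  is_derive s0 1 (fun s : R => phi (x0 + s *: h)) (dotv gr h).
Proof.
move=> hg.
have hc : (fun t : R => t^-1 *: (((fun s : R => phi (x0 + s *: h)) \o shift s0) (t *: 1)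
   - phi (x0 + s0 *: h))) @ 0^' --> dotv gr h.
  apply/cvgrPdist_le => e e0.
  set b := enorm h + 1.
  have b0 : 0 < b by rewrite /b ltr_pwDr // enorm_ge0.
  have [del del0 hdel] := hg (e / b) (divr_gt0 e0 b0).
  rewrite /= near_withinE; apply/nbhs_ballP; exists (del / b); first exact: divr_gt0.
  move=> t /= ht tn0.
  move: ht; rewrite /ball /= sub0r normrN => ht.
  have -> : x0 + (t%:A + s0) *: h = x0 + s0 *: h + t *: h.
    by rewrite [t%:A]mulr1 scalerDl [t *: h + _]addrC addrA.
  have hth : enorm (t *: h) < del.
    rewrite enormZ; apply: (@le_lt_trans _ _ (`|t| * b)).
      by apply: ler_wpM2l => //; rewrite /b lerDl.
    by rewrite -ltr_pdivlMr.
  have := hdel _ hth.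
  set D := phi (x0 + s0 *: h + t *: h) - phi (x0 + s0 *: h).
  have -> : dotv gr h - t^-1 *: D = - t^-1 * (D - dotv gr (t *: h)).
    by rewrite dotvZr /GRing.scale /=; field.
  rewrite normrM normrN normfV => hD.
  rewrite -ler_pdivlMl ?invr_gt0 ?normr_gt0 // invrK.
  apply: le_trans hD _; rewrite enormZ mulrCA; apply: ler_wpM2l => //.
  by rewrite mulrAC ler_pdivrMr // ler_pM2l // /b lerDl.
apply: DeriveDef; first exact: cvgP hc.
exact: cvg_lim hc.
Qed.

Lemma QB (R : realType) n (phi : 'rV[R]_n -> R) (G : 'rV[R]_n -> 'rV[R]_n)
  (xb h : 'rV[R]_n) (K del r0 : R) :
  (forall x, enorm (x - xb) < r0 -> is_grad phi x (G x)) ->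
  (forall y z, enorm (y - xb) < del -> enorm (z - xb) < del ->
     enorm (G y - G z) <= K * enorm (y - z)) ->
  G xb = 0 -> enorm h < r0 -> enorm h < del -> 0 <= K ->
  phi (xb + h) - phi xb <= K * enorm h ^+ 2.
Proof.
move=> hg hL G0 hr hd K0.
have hs : forall s : R, 0 <= s <= 1 -> enorm (s *: h) <= enorm h.
  move=> s /andP[s0 s1]; rewrite enormZ ger0_norm // -[X in _ <= X]mul1r.
  by apply: ler_wpM2r => //; exact: enorm_ge0.
have hder : forall s : R, 0 <= s <= 1 ->
    is_derive s 1 (fun s : R => phi (xb + s *: h)) (dotv (G (xb + s *: h)) h).
  move=> s hs01; apply: DL; apply: hg.
  by rewrite addrC addKr; apply: le_lt_trans (hs _ hs01) hr.
have hcont : {within `[0, 1], continuous (fun s : R => phi (xb + s *: h))}.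
  apply: derivable_within_continuous => s hs'.
  have hs01 : 0 <= s <= 1 by move: hs'; rewrite in_itv.
  exact: (@ex_derive _ _ _ _ _ _ _ (hder s hs01)).
have hder' : forall s : R, s \in `]0, 1[ ->
    is_derive s 1 (fun s : R => phi (xb + s *: h)) (dotv (G (xb + s *: h)) h).
  move=> s hs'; apply: hder; move: hs'; rewrite in_itv /= => /andP[a b].
  by rewrite !ltW.
have [c hc heq] := MVT_segment ler01 hder' hcont.
move: heq; rewrite scale1r scale0r addr0 subr0 mulr1 => ->.
move: hc; rewrite in_itv /= => hc01.
apply: le_trans (dotv_le _ _) _.
rewrite expr2 mulrA; apply: ler_wpM2r; first exact: enorm_ge0.
have -> : G (xb + c *: h) = G (xb + c *: h) - G xb by rewrite G0 subr0.
apply: le_trans (hL _ _ _ _) _.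
- by rewrite addrC addKr; apply: le_lt_trans (hs _ hc01) hd.
- by rewrite subrr enorm0; apply: le_lt_trans (enorm_ge0 h) hd.
- by rewrite addrC addKr; apply: ler_wpM2l => //; exact: hs.
Qed.


Section KL.
Variables (R : realType) (n : nat) (phi : 'rV[R]_n -> R) (G m : 'rV[R]_n -> 'rV[R]_n).
Variables (xb : 'rV[R]_n) (gam del L r0 del1 K : R).
Hypothesis gam0 : 0 < gam.
Hypothesis del0 : 0 < del.
Hypothesis r00 : 0 < r0.
Hypothesis del10 : 0 < del1.
Hypothesis K1 : 1 <= K.
Hypothesis L1 : 1 <= L.
Hypothesis hg : forall x, enorm (x - xb) < r0 -> is_grad phi x (G x).
Hypothesis hL : forall y z, enorm (y - xb) < del1 -> enorm (z - xb) < del1 ->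
     enorm (G y - G z) <= K * enorm (y - z).
Hypothesis hMin : forall v, enorm v < del -> enorm (m v - xb) <= gam /\
  forall y, enorm (y - xb) <= gam -> phi (m v) - dotv v (m v) <= phi y - dotv v y.
Hypothesis hLip : forall v w, enorm v < del -> enorm w < del ->
   enorm (m v - m w) <= L * enorm (v - w).
Hypothesis m0 : m 0 = xb.
Hypothesis G0 : G xb = 0.

Let c := Num.min (Num.min r0 gam) del1.
Let c0 : 0 < c. Proof. by rewrite !lt_min r00 gam0 del10. Qed.
Let rho := Num.min (del / 2) (c / (2 * L)).
Let K0 : 0 < K. Proof. exact: lt_le_trans ltr01 K1. Qed.
Let L0 : 0 < L. Proof. exact: lt_le_trans ltr01 L1. Qed.
Let rho0 : 0 < rho.
Proof. by rewrite lt_min !divr_gt0 ?mulr_gt0. Qed.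
Let rho_del : rho < del.
Proof. rewrite gt_min; apply/orP; left. have := del0. lra. Qed.
Let rho_c : rho * L <= c / 2.
Proof.
rewrite -ler_pdivlMr // (_ : c / 2 / L = c / (2 * L)); last by field; rewrite gt_eqF.
by rewrite ge_min lexx orbT.
Qed.
Let cr0 : c <= r0. Proof. by rewrite !ge_min lexx. Qed.
Let cgam : c <= gam. Proof. by rewrite !ge_min lexx !orbT. Qed.
Let cdel1 : c <= del1. Proof. by rewrite !ge_min lexx !orbT. Qed.

Lemma mv_near v : enorm v <= rho -> enorm (m v - xb) <= c / 2.
Proof.
move=> hv; rewrite -m0; apply: le_trans (hLip _ _ _ _) _.
- exact: le_lt_trans hv rho_del.
- by rewrite enorm0.
rewrite subr0; apply: le_trans rho_c; rewrite mulrC; apply: ler_wpM2r => //; exact: ltW.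
Qed.


Let rho_c2 : rho <= c / 2.
Proof. apply: le_trans rho_c; rewrite ler_peMr //; exact: ltW. Qed.

Lemma psi_upper v : enorm v <= rho ->
  phi (m v) - dotv v (m v) <= phi xb - dotv v xb - enorm v ^+ 2 / (4 * K).
Proof.
move=> hv; set h := (2 * K)^-1 *: v.
have hK2 : 0 < 2 * K by rewrite mulr_gt0.
have hh : enorm h = enorm v / (2 * K).
  by rewrite /h enormZ gtr0_norm ?invr_gt0 // mulrC.
have hh2 : enorm h <= c / 2.
  rewrite hh ler_pdivrMr //; apply: le_trans (le_trans hv rho_c2) _.
  rewrite ler_peMr ?divr_ge0 ?(ltW c0) //; have := K1; lra.
have hcpos := c0. have := cr0. have := cgam. have := cdel1. move=> ? ? ?.
have := (hMin v (le_lt_trans hv rho_del)).2 (xb + h).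
rewrite addrC addKr => /(_ ltac:(lra)) h1.
have := @QB R n phi G xb h K del1 r0 hg hL G0 (ltac:(lra) : enorm h < r0) (ltac:(lra) : enorm h < del1) (ltW K0).
set a := enorm v ^+ 2 / (4 * K).
have e1 : dotv v h = 2 * a.
  rewrite /h dotvZr -enorm_sq /a; field; rewrite gt_eqF //.
have e2 : K * enorm h ^+ 2 = a.
  rewrite hh /a; field; rewrite gt_eqF //.
rewrite e2 => h2.
rewrite dotvDr e1 in h1.
lra.
Qed.

Lemma Phi_cont x v0 : enorm v0 <= rho ->
  {for v0, continuous (fun v => phi (m v) - dotv v (m v) + dotv v x)}.
Proof.
move=> hv0; apply: cont_enorm => e e0.
set y0 := m v0.
have hy0 : enorm (y0 - xb) < r0.
  have := mv_near v0 hv0; have := cr0; have := c0; rewrite -/y0; lra.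
have [d1 d10 hd1] := hg y0 hy0 1 ltr01.
set C1 := enorm (G y0) + 1.
have C10 : 0 <= C1 by rewrite /C1 addr_ge0 ?enorm_ge0.
set C := C1 * L + L + enorm y0 + enorm v0 * L + enorm x + 1.
have C0 : 0 < C.
  rewrite /C; have := enorm_ge0 y0; have := enorm_ge0 v0; have := enorm_ge0 x.
  have : 0 <= C1 * L by rewrite mulr_ge0 // ltW.
  have : 0 <= enorm v0 * L by rewrite mulr_ge0 ?enorm_ge0 // ltW.
  have := L0; lra.
have hdv0 : 0 < del - enorm v0 by have := rho_del; lra.
have hL1 : 0 < L + 1 by have := L0; lra.
exists (Num.min (Num.min 1 (del - enorm v0)) (Num.min (d1 / (L + 1)) (e / C))).
  by rewrite !lt_min ltr01 hdv0 !divr_gt0.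
move=> v; rewrite !lt_min => /andP[/andP[ha1 ha2] /andP[ha3 ha4]].
set a := enorm (v - v0) in ha1 ha2 ha3 ha4.
have a0 : 0 <= a := enorm_ge0 _.
have hv : enorm v < del.
  have := enormD (v - v0) v0; rewrite subrK -/a; lra.
have hv0' : enorm v0 < del by have := rho_del; lra.
set k := m v - y0.
have F1 : enorm k <= L * a by apply: hLip.
have hk : enorm k < d1.
  apply: le_lt_trans F1 _.
  rewrite ltr_pdivlMr // in ha3; have := L0; nra.
have := hd1 k hk; rewrite mul1r.
have -> : y0 + k = m v by rewrite /k addrC subrK.
move=> hP.
have F2 : `|phi (m v) - phi y0| <= C1 * (L * a).
  apply: le_trans (_ : _ <= C1 * enorm k) _; last by apply: ler_wpM2l.
  have := CS (G y0) k; rewrite /C1 mulrDl mul1r.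
  move: hP; rewrite !ler_norml => /andP[p1 p2] /andP[q1 q2].
  apply/andP; split; lra.
have hmv : enorm (m v) <= enorm k + enorm y0.
  by have := enormD k y0; rewrite /k subrK.
have F3 : `|dotv (v - v0) (m v)| <= a * L + a * enorm y0.
  apply: le_trans (CS _ _) _; rewrite -/a -mulrDr; apply: ler_wpM2l => //.
  have : L * a <= L by apply: ler_piMr; [exact: ltW L0 | exact: ltW ha1].
  lra.
have F4 : `|dotv v0 k| <= enorm v0 * (L * a).
  apply: le_trans (CS _ _) _; apply: ler_wpM2l => //; exact: enorm_ge0.
have F5 : `|dotv (v - v0) x| <= a * enorm x by apply: CS.
have eq1 : phi (m v) - dotv v (m v) + dotv v x - (phi y0 - dotv v0 y0 + dotv v0 x)
   = (phi (m v) - phi y0) - dotv (v - v0) (m v) - dotv v0 k + dotv (v - v0) x.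
  rewrite /k !dotvBl !dotvBr; ring.
rewrite -/y0 eq1.
have eqC : a * C = C1 * (L * a) + (a * L + a * enorm y0) + enorm v0 * (L * a) + a * enorm x + a.
  by rewrite /C; ring.
have haC : a * C < e by rewrite ltr_pdivlMr // in ha4.
set P := phi (m v) - phi y0 in F2 *.
set Q1 := dotv (v - v0) (m v) in F3 *.
set Q2 := dotv v0 k in F4 *.
set Q3 := dotv (v - v0) x in F5 *.
have t1 := ler_normD (P - Q1 - Q2) Q3.
have t2 := ler_normD (P - Q1) (- Q2).
have t3 := ler_normD P (- Q1).
idtac.
rewrite normrN in t2. rewrite normrN in t3. lra.
Qed.

Lemma KL_main : exists2 rx : R, 0 < rx &
  forall x, enorm (x - xb) < rx -> exists2 v, enorm v < del & m v = x.
Proof.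
exists (rho / (4 * K)); first by rewrite divr_gt0 // mulr_gt0.
move=> x hx.
set A := [set v : 'rV[R]_n | enorm (v - 0) <= rho].
set Phi := fun v => phi (m v) - dotv v (m v) + dotv v x.
have cA : compact A.
  apply: bounded_closed_compact; last exact: closed_eball.
  by apply: (@bounded_eball _ _ _ rho) => y; rewrite /A /= subr0.
have A0 : A !=set0 by exists 0; rewrite /A /= subrr enorm0 ltW.
have cPhi : {within A, continuous Phi}.
  apply: continuous_in_subspaceT => v; rewrite inE /A /= subr0 => hv.
  exact: Phi_cont.
have [vs hvs hmax] := EVT_max_rV A0 cA cPhi.
move: hvs; rewrite inE /A /= subr0 => hvs.
have hvsd : enorm vs < del := le_lt_trans hvs rho_del.
have hP0 : Phi 0 <= Phi vs by apply: hmax; rewrite inE /A /= subrr enorm0 ltW.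
have hPhi0 : Phi 0 = phi xb by rewrite /Phi m0 !dotv0l subr0 addr0.
have hup := psi_upper vs hvs.
have hlt : enorm vs < rho.
  have hcs := dotv_le vs (x - xb).
  rewrite hPhi0 /Phi in hP0.
  rewrite dotvBr in hcs.
  set a := enorm vs in hup hcs hvs *.
  have a0 : 0 <= a := enorm_ge0 vs.
  have hq := enorm_ge0 (x - xb).
  set q := enorm (x - xb) in hcs hq hx.
  have h1 : a ^+ 2 / (4 * K) <= a * q by lra.
  have hK4 : 0 < 4 * K by rewrite mulr_gt0.
  rewrite ler_pdivrMr // in h1.
  rewrite ltr_pdivlMr // in hx.
  have := rho0; nra.
exists vs => //.
set d := x - m vs.
set s := Num.min ((rho - enorm vs) / (2 * (enorm d + 1))) (1 / (2 * L)).
have hd0 : 0 <= enorm d := enorm_ge0 d.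
have hd1 : 0 < 2 * (enorm d + 1) by rewrite mulr_gt0 //; lra.
have s0 : 0 < s.
  rewrite lt_min; apply/andP; split; apply: divr_gt0 => //; first by rewrite subr_gt0.
  by rewrite mulr_gt0.
have hsd : s * enorm d < rho - enorm vs.
  have : s <= (rho - enorm vs) / (2 * (enorm d + 1)) by rewrite ge_min lexx.
  rewrite ler_pdivlMr // => h1.
  have e : s * (2 * (enorm d + 1)) = 2 * (s * enorm d) + 2 * s by ring.
  have : 0 <= s * enorm d by rewrite mulr_ge0 // ltW.
  lra.
have hLs : L * s <= 1 / 2.
  have : s <= 1 / (2 * L) by rewrite ge_min lexx orbT.
  rewrite ler_pdivlMr ?mulr_gt0 //; lra.
set w := vs + s *: d.
have hw : enorm w <= rho.
  have := enormD vs (s *: d); rewrite enormZ gtr0_norm // -/w; lra.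
have hwd : enorm w < del := le_lt_trans hw rho_del.
have hmw : Phi w <= Phi vs by apply: hmax; rewrite inE /A /= subr0.
have hmin := (hMin vs hvsd).2 (m w) (hMin w hwd).1.
have I1 : s * (dotv d x - dotv d (m w)) <= 0.
  have ew : forall y, dotv w y = dotv vs y + s * dotv d y.
    by move=> y; rewrite /w dotvDl dotvZl.
  move: hmw; rewrite /Phi !ew => hmw; lra.
have I2 : dotv d x - dotv d (m w) <= 0.
  by rewrite -(pmulr_rle0 _ s0).
have I3 : dotv d (m w - m vs) <= enorm d * (L * (s * enorm d)).
  apply: le_trans (dotv_le _ _) _; apply: ler_wpM2l => //.
  apply: le_trans (hLip w vs hwd hvsd) _.
  by rewrite /w addrC addKr enormZ gtr0_norm.
have I4 : dotv d d = enorm d ^+ 2 by rewrite enorm_sq.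
rewrite {2}/d dotvBr in I4.
rewrite dotvBr in I3.
have : enorm d ^+ 2 <= 0.
  have e5 : enorm d * (L * (s * enorm d)) = (L * s) * enorm d ^+ 2 by ring.
  rewrite e5 in I3.
  have := sqr_ge0 (enorm d); nra.
move=> h; apply/eqP; rewrite -subr_eq0 -/d; apply/eqP; apply: enorm_eq0.
have h2 : enorm d <= 0 by nra.
apply/le_anti; apply/andP; split; last exact: enorm_ge0.
by rewrite enormB.
Qed.
End KL.


Section Ap.
Variables (R : realType) (n : nat) (G : 'rV[R]_n -> 'rV[R]_n) (x : 'rV[R]_n).

Definition Ap : set 'rV[R]_n := [set Y | forall e, 0 < e -> exists t y w,
  [/\ 0 < t, t < e, enorm (y - Y) < e, enorm (w + G x) < e & G (x + t *: y) = G x + t *: w]].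

Lemma ups_to_ap Y : Upsilon G x Y -> Ap Y.
Proof.
move=> [t [wk [t0 [tc [wc hg]]]]] e e0.
have h1 : (fun k => (wk k).1) @ \oo --> Y := cvg_comp _ _ wc (@cvg_fst _ _ _ _ (nbhs_filter _)).
have h2 : (fun k => (wk k).2) @ \oo --> - G x := cvg_comp _ _ wc (@cvg_snd _ _ _ _ (nbhs_filter _)).
have {}h1 : \forall k \near \oo, enorm ((wk k).1 - Y) < e by exact: (proj1 (cvg_enormP _ _) h1).
have {}h2 : \forall k \near \oo, enorm ((wk k).2 - - G x) < e by exact: (proj1 (cvg_enormP _ _) h2).
move/cvgrPdist_lt: tc => /(_ e e0) h3.
have [k [k1 [k2 k3]]] : exists k, enorm ((wk k).1 - Y) < e /\ (enorm ((wk k).2 - - G x) < e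
   /\ `|0 - t k| < e).
  apply: (@filter_ex _ \oo _); exact: filterI h1 (filterI h2 h3).
exists (t k), (wk k).1, (wk k).2; split => //.
- by move: k3; rewrite sub0r normrN gtr0_norm.
- by move: k2; rewrite opprK.
- have := hg k; rewrite /graph_of /=.
  by case: (wk k) => a b /= ->.
Qed.

Lemma ap_to_ups Y : Ap Y -> Upsilon G x Y.
Proof.
move=> hY.
have : forall k : nat, exists p : R * ('rV[R]_n * 'rV[R]_n),
   [/\ 0 < p.1, p.1 < k.+1%:R^-1, enorm (p.2.1 - Y) < k.+1%:R^-1,
       enorm (p.2.2 + G x) < k.+1%:R^-1 & G (x + p.1 *: p.2.1) = G x + p.1 *: p.2.2].
  move=> k; have [t [y [w h]]] := hY (k.+1%:R^-1) ltac:(by rewrite invr_gt0 ltr0n).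
  by exists (t, (y, w)).
move=> /choice [f hf].
exists (fun k => (f k).1), (fun k => (f k).2); split; [|split; [|split]].
- by move=> k; have [] := hf k.
- apply/cvgrPdist_lt => e e0.
  apply: filterS (near_infty_natSinv_lt (PosNum e0)) => k /= hk.
  have [a b _ _ _] := hf k.
  by rewrite sub0r normrN gtr0_norm //; apply: lt_trans hk.
- have e1 : (fun k => (f k).2.1) @ \oo --> Y.
    apply/cvg_enormP => e e0.
    apply: filterS (near_infty_natSinv_lt (PosNum e0)) => k /= hk.
    by have [_ _ c _ _] := hf k; apply: lt_trans hk.
  have e2 : (fun k => (f k).2.2) @ \oo --> - G x.
    apply/cvg_enormP => e e0.
    apply: filterS (near_infty_natSinv_lt (PosNum e0)) => k /= hk.
    by have [_ _ _ c _] := hf k; rewrite opprK; apply: lt_trans hk.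
  have -> : (fun k => (f k).2) = (fun k => ((f k).2.1, (f k).2.2)).
    by apply/funext => k; case: (f k).2.
  exact: (@cvg_pair _ _ _ _ _ _ _ (nbhs_filter Y) (nbhs_filter (- G x)) _ _ e1 e2).
- move=> k; rewrite /graph_of /=; by have [_ _ _ _ ->] := hf k.
Qed.

Lemma closed_ap : closed Ap.
Proof.
move=> Y hY e e0.
have e20 : 0 < e / 2 by rewrite divr_gt0.
have [Y' [hY' hb]] := hY _ (nbhsx_ballx Y (e / 2 / n.+1%:R) (divr_gt0 e20 (ltr0Sn _ _))).
have hYY := enorm_lt_mx (Y - Y') (e / 2) e20 (ball_mx _ _ _ hb).
have [t [y [w [t0 t1 h1 h2 h3]]]] := hY' _ e20.
exists t, y, w; split => //; try lra.
have := enormD (y - Y') (Y' - Y); rewrite addrA subrK enormB (enormB Y').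
lra.
Qed.
End Ap.


Theorem proposition5p2 (R : realType) (n : nat)
  (phi : 'rV[R]_n -> R) (G : 'rV[R]_n -> 'rV[R]_n) (xbar : 'rV[R]_n)
  (hC11 : C11_near phi G xbar) (htilt : tilt_stable_min phi xbar) :
  exists2 r : R, 0 < r &
    forall x : 'rV[R]_n, enorm (x - xbar) < r ->
      Upsilon G x !=set0 /\ compact (Upsilon G x).
Proof.
have hxx : enorm (xbar - xbar) = 0 by rewrite subrr enorm0.
case: hC11 => r0 r00 [hg hloc].
have [del1 [K [del10 hL]]] := hloc xbar ltac:(by rewrite hxx).
case: htilt => gam gam0 [del [L [m [del0 [hM [hLip hM0]]]]]].
set K1 := `|K| + 1; set L1 := `|L| + 1.
have K1ge : 1 <= K1 by rewrite /K1 lerDr.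
have L1ge : 1 <= L1 by rewrite /L1 lerDr.
have K1pos : 0 < K1 by apply: lt_le_trans K1ge.
have L1pos : 0 < L1 by apply: lt_le_trans L1ge.
have hL' : forall y z, enorm (y - xbar) < del1 -> enorm (z - xbar) < del1 ->
    enorm (G y - G z) <= K1 * enorm (y - z).
  move=> y z hy hz; apply: le_trans (hL y z hy hz) _; apply: ler_wpM2r.
    exact: enorm_ge0.
  by rewrite /K1; apply: le_trans (ler_norm K) _; rewrite lerDl.
have hLip' : forall v w, enorm v < del -> enorm w < del ->
    enorm (m v - m w) <= L1 * enorm (v - w).
  move=> v w hv hw; apply: le_trans (hLip v w hv hw) _; apply: ler_wpM2r.
    exact: enorm_ge0.
  by rewrite /L1; apply: le_trans (ler_norm L) _; rewrite lerDl.
have hMin : forall v, enorm v < del -> enorm (m v - xbar) <= gam /\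
    forall y, enorm (y - xbar) <= gam -> phi (m v) - dotv v (m v) <= phi y - dotv v y.
  move=> v hv; have : Mtilt phi xbar gam v (m v) by rewrite hM.
  by case.
have e00 : enorm (0 : 'rV[R]_n) < del by rewrite enorm0.
have m0 : m 0 = xbar.
  have : [set m 0] xbar by rewrite -(hM 0 e00) hM0.
  by move=> ->.
have G0 : G xbar = 0.
  apply: (@CP R n phi G xbar xbar 0 gam (hg xbar ltac:(by rewrite hxx))); last by rewrite hxx.
  by move=> y hy; have := (hMin 0 e00).2 y hy; rewrite m0.
have [rx rx0 hKL] := @KL_main R n phi G m xbar gam del L1 r0 del1 K1 gam0 del0 r00 del10 K1ge L1ge hg hL' hMin hLip' m0 G0.
set c0 := Num.min r0 gam.
have c0pos : 0 < c0 by rewrite lt_min r00 gam0.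
have c0r : c0 <= r0 by rewrite ge_min lexx.
have c0g : c0 <= gam by rewrite ge_min lexx orbT.
have CPm : forall u, enorm u < del -> enorm (m u - xbar) < c0 -> G (m u) = u.
  move=> u hu hmu.
  apply: (@CP R n phi G xbar (m u) u gam).
  - by apply: hg; apply: lt_le_trans hmu c0r.
  - exact: (hMin u hu).2.
  - exact: lt_le_trans hmu c0g.
set r1 := Num.min rx c0.
have r1pos : 0 < r1 by rewrite lt_min rx0 c0pos.
have hr1x : r1 <= rx by rewrite ge_min lexx.
have hr1c : r1 <= c0 by rewrite ge_min lexx orbT.
have hF : forall z, enorm (z - xbar) < r1 -> m (G z) = z /\ enorm (G z) < del.
  move=> z hz.
  have [v hv hmv] := hKL z (lt_le_trans hz hr1x).
  have : G z = v.
    by rewrite -hmv; apply: CPm => //; rewrite hmv; apply: lt_le_trans hz hr1c.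
  by move=> ->; split.
set del3 := Num.min del (c0 / L1).
have del3pos : 0 < del3 by rewrite lt_min del0 divr_gt0.
have del3d : del3 <= del by rewrite ge_min lexx.
have del3c : del3 * L1 <= c0.
  by rewrite -ler_pdivlMr // ge_min lexx orbT.
exists (Num.min r1 (Num.min del1 (del3 / K1))).
  by rewrite lt_min r1pos /= lt_min del10 divr_gt0.
move=> x; rewrite lt_min => /andP[hxr1]; rewrite lt_min => /andP[hxd1 hxd3].
have [mGx hGxd] := hF x hxr1.
have hGx : enorm (G x) < del3.
  have -> : G x = G x - G xbar by rewrite G0 subr0.
  apply: le_lt_trans (hL' x xbar hxd1 _) _; first by rewrite hxx.
  by rewrite mulrC -ltr_pdivlMr.
have eqU : Upsilon G x = Ap _ _ G x.
  apply/seteqP; split => Y; [exact: ups_to_ap | exact: ap_to_ups].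
have hbd : forall Y, Ap _ _ G x Y -> enorm Y <= L1 * enorm (G x).
  move=> Y hY; apply/ler_addgt0Pr => e e0.
  set gap := r1 - enorm (x - xbar).
  have gap0 : 0 < gap by rewrite subr_gt0.
  have hY0 := enorm_ge0 Y.
  have hY2 : 0 < enorm Y + 2 by lra.
  have hL2 : 0 < L1 + 1 by lra.
  set e' := Num.min (Num.min 1 (e / (L1 + 1))) (gap / (enorm Y + 2)).
  have e'1 : e' <= 1 by rewrite !ge_min lexx.
  have e'2 : e' <= e / (L1 + 1) by rewrite !ge_min lexx orbT.
  have e'3 : e' <= gap / (enorm Y + 2) by rewrite !ge_min lexx !orbT.
  have e'0 : 0 < e'.
    rewrite lt_min; apply/andP; split; last exact: divr_gt0.
    by rewrite lt_min ltr01 divr_gt0.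
  have [t [y [w [t0 t1 hy hw hGz]]]] := hY e' e'0.
  have hyY : enorm y <= enorm Y + 1.
    have := enormD (y - Y) Y; rewrite subrK; lra.
  have hty : t * enorm y < gap.
    rewrite ler_pdivlMr // in e'3.
    have := enorm_ge0 y; nra.
  set z := x + t *: y.
  have hz : enorm (z - xbar) < r1.
    have := enormD (x - xbar) (t *: y); rewrite enormZ gtr0_norm // addrAC -/z.
    rewrite /gap in hty; lra.
  have [mGz hGzd] := hF z hz.
  have hlip := hLip' (G z) (G x) hGzd hGxd.
  rewrite mGz mGx hGz /z addrAC subrr add0r addrAC subrr add0r !enormZ gtr0_norm // in hlip.
  have hyw : enorm y <= L1 * enorm w.
    rewrite mulrCA ler_pM2l // in hlip.
  have hww : enorm w <= e' + enorm (G x).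
    by have := enormD (w + G x) (- G x); rewrite addrK enormN; lra.
  have hYy : enorm Y <= e' + enorm y.
    by have := enormD (Y - y) y; rewrite subrK enormB; lra.
  rewrite ler_pdivlMr // in e'2.
  have : L1 * enorm w <= L1 * (e' + enorm (G x)) by apply: ler_wpM2l => //; lra.
  lra.
have hcomp : compact (Upsilon G x).
  rewrite eqU; apply: bounded_closed_compact; last exact: closed_ap.
  by apply: (@bounded_eball _ _ _ (L1 * enorm (G x))) => Y; exact: hbd.
split => //.
set q := fun t : R => t^-1 *: (m ((1 - t) *: G x) - x).
have hu : forall t : R, 0 < t -> t <= 1 -> enorm ((1 - t) *: G x) < del3.
  move=> t t0 t1; rewrite enormZ ger0_norm ?subr_ge0 //.
  apply: le_lt_trans hGx; rewrite ler_piMl ?enorm_ge0 //; lra.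
have hq : forall t : R, 0 < t -> t <= 1 -> enorm (q t) <= L1 * enorm (G x).
  move=> t t0 t1; rewrite /q enormZ ger0_norm; last by rewrite invr_ge0 ltW.
  rewrite -{2}mGx; have hut := hu t t0 t1.
  have := hLip' _ _ (lt_le_trans hut del3d) hGxd.
  rewrite scalerBl scale1r addrAC subrr add0r enormN enormZ gtr0_norm // => h1.
  rewrite ler_pdivrMl //; apply: le_trans h1 _; lra.
set C := [set y : 'rV[R]_n | enorm (y - 0) <= L1 * enorm (G x)].
have cC : compact C.
  apply: bounded_closed_compact; last exact: closed_eball.
  by apply: (@bounded_eball _ _ _ (L1 * enorm (G x))) => y; rewrite /C /= subr0.
have FC : (q @ 0^'+) C.
  rewrite /=; apply: filterS2 (nbhs_right_gt 0) (nbhs_right_lt ltr01) => t t0 t1.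
  by rewrite /C /= subr0; apply: hq => //; exact: ltW.
have [Y [CY clY]] := cC _ _ FC.
exists Y; apply: ap_to_ups => e e0.
have em0 : 0 < Num.min e 1 by rewrite lt_min e0 ltr01.
have FA : (q @ 0^'+) [set z | exists2 t, 0 < t < Num.min e 1 & z = q t].
  rewrite /=; apply: filterS2 (nbhs_right_gt 0) (nbhs_right_lt em0) => t t0 t1.
  by exists t => //; rewrite t0 t1.
have eN : 0 < e / n.+1%:R by rewrite divr_gt0.
have [z [[t /andP[t0 t1] ->] hb]] := clY _ _ FA (nbhsx_ballx Y _ eN).
have hYq := enorm_lt_mx (Y - q t) e e0 (ball_mx _ _ _ hb).
have te : t < e by move: t1; rewrite lt_min => /andP[].
have t1' : t <= 1 by move: t1; rewrite lt_min => /andP[_ /ltW].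
exists t, (q t), (- G x); split => //.
- by rewrite enormB.
- by rewrite addNr enorm0.
- have -> : x + t *: q t = m ((1 - t) *: G x).
    rewrite /q scalerA mulfV ?gt_eqF // scale1r addrC subrK //.
  rewrite CPm.
  + by rewrite scalerBl scale1r scalerN.
  + exact: lt_le_trans (hu t t0 t1') del3d.
  + rewrite -m0; apply: le_lt_trans (hLip' _ _ (lt_le_trans (hu t t0 t1') del3d) e00) _.
    rewrite subr0; apply: lt_le_trans del3c; rewrite mulrC ltr_pM2r //; exact: hu.
Qed.
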